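(* Let $L\ge2$, let $\boldsymbol\gamma\in\mathbb R^L$, and let $\Omega$ be a symmetric positive definite $L\times L$ matrix such that $\lambda^{EGMM}_k>0$ for all $k$, where $\lambda^{EGMM}_k=\gamma_k[\Omega^{-1}\boldsymbol\gamma]_k/(\boldsymbol\gamma'\Omega^{-1}\boldsymbol\gamma)$. Then for each $\ell$, viewing $\lambda^{EGMM}_\ell$ as a function of the diagonal entry $[\Omega]_{\ell\ell}$ with all other entries of $\Omega$ held fixed, $$\frac{\partial\lambda^{EGMM}_\ell}{\partial[\Omega]_{\ell\ell}}<0.$$
   Context: In the paper, $\boldsymbol\gamma=(\mathrm{Cov}(D_i,Z_{1i}),\dots,\mathrm{Cov}(D_i,Z_{Li}))'$ are first-stage covariances of a binary treatment with $L$ binary instruments and $\Omega$ is the second moment matrix of the IV moment vector; $\lambda^{EGMM}$ are the implied efficient-GMM weights on the instrument-specific Wald estimands. The result is motivated by the premise that increasing within-complier treatment-effect variance for instrument $\ell$ increases $[\Omega]_{\ell\ell}$ while leaving other entries unchanged. *)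

(* Defs.v *)
From HB Require Import structures.
From mathcomp Require Import all_boot all_order all_algebra.
From mathcomp Require Import all_classical all_reals all_analysis.
Set Implicit Arguments. Unset Strict Implicit. Unset Printing Implicit Defensive.
Import Order.TTheory GRing.Theory Num.Theory.
Import numFieldNormedType.Exports.
Local Open Scope ring_scope.

Definition sym_posdef (R : realType) (L : nat) (Om : 'M[R]_L) : Prop :=
  Om^T = Om /\ forall x : 'cV[R]_L, x != 0 -> 0 < (x^T *m Om *m x) 0 0.

Definition lambda_EGMM (R : realType) (L : nat) (gamma : 'cV[R]_L)
    (Om : 'M[R]_L) (k : 'I_L) : R :=
  gamma k 0 * (invmx Om *m gamma) k 0 / (gamma^T *m invmx Om *m gamma) 0 0.

Definition lambda_diag (R : realType) (L : nat) (gamma : 'cV[R]_L)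
    (Om : 'M[R]_L) (l : 'I_L) (t : R) : R :=
  lambda_EGMM gamma (\matrix_(i, j) (if (i == l) && (j == l) then t else Om i j)) l.

(* Main.v *)
Require Import Defs.
From HB Require Import structures.
From mathcomp Require Import all_boot all_order all_algebra.
From mathcomp Require Import all_classical all_reals all_analysis.
Import Order.TTheory GRing.Theory Num.Theory.
Import numFieldNormedType.Exports.
Local Open Scope ring_scope.
From mathcomp Require Import ring lra.

Lemma pd_unit (R : realType) L (Om : 'M[R]_L) :
  sym_posdef Om -> Om \in unitmx.
Proof.
move=> [sym pd]; rewrite unitmxE unitfE; apply/negP => /det0P [v v0 vO].
have x0 : v^T != 0 by apply: contra v0 => /eqP h; apply/eqP/trmx_inj; rewrite h trmx0.
have := pd _ x0; rewrite trmxK vO mul0mx mxE.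
by rewrite ltxx.
Qed.

Lemma pd_inv (R : realType) L (Om : 'M[R]_L) :
  sym_posdef Om -> forall x : 'cV[R]_L, x != 0 -> 0 < (x^T *m invmx Om *m x) 0 0.
Proof.
move=> spd x x0; have u := @pd_unit R L Om spd; case: spd => [sym pd].
set y := invmx Om *m x.
have xy : x = Om *m y by rewrite /y mulKVmx.
have y0 : y != 0 by apply: contra x0 => /eqP h; rewrite xy h mulmx0.
clearbody y.
suff -> : (x^T *m invmx Om *m x) = y^T *m Om *m y by apply: pd.
rewrite xy trmx_mul sym -!mulmxA (mulmxA (invmx Om)) mulVmx // mul1mx.
by rewrite !mulmxA.
Qed.

Lemma entryB (R : comNzRingType) m n (A Y : 'M[R]_(m, n)) i j :
  (A - Y) i j = A i j - Y i j.
Proof. by rewrite !mxE. Qed.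
Lemma entryZ (R : comNzRingType) m n (A : 'M[R]_(m, n)) c i j :
  (c *: A) i j = c * A i j.
Proof. by rewrite !mxE. Qed.

Lemma cs_quad (R : realType) L (B : 'M[R]_L) (g : 'cV[R]_L) l : B^T = B ->
  let v := B *m g in let vl := v l 0 in let q := (g^T *m B *m g) 0 0 in
  let w := q *: delta_mx l 0 - vl *: g in
  (w^T *m B *m w) 0 0 = q * (B l l * q - vl ^+ 2).
Proof.
move=> symB v vl q w.
have tw : w^T = q *: (delta_mx l 0)^T - vl *: g^T by apply/matrixP => i j; rewrite !mxE.
have gB : g^T *m B = v^T by rewrite /v trmx_mul symB.
rewrite tw trmx_delta /w !(mulmxBl, mulmxBr) -!(scalemxAl, scalemxAr) !(entryB, entryZ).
rewrite -/q gB -rowE -!row_mul -!colE -/v.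
clearbody v; rewrite !mxE -/vl.
clearbody vl q.
ring.
Qed.

Lemma mul_delta_entry (R : comNzRingType) m L n (P : 'M[R]_(m, L)) (Q : 'M[R]_(L, n)) l i j :
  (P *m delta_mx l l *m Q) i j = P i l * Q l j.
Proof.
rewrite -(mul_delta_mx (0 : 'I_1)) mulmxA -colE -mulmxA -rowE.
by rewrite !mxE big_ord1 !mxE.
Qed.

Lemma diag_repl (R : comNzRingType) L (Om : 'M[R]_L) l t :
  (\matrix_(i, j) (if (i == l) && (j == l) then t else Om i j)) =
  Om + (t - Om l l) *: delta_mx l l.
Proof.
apply/matrixP => i j; rewrite !mxE.
have [->|il] := eqVneq i l; have [->|jl] := eqVneq j l;
  rewrite ?eqxx ?(negbTE il) ?(negbTE jl) /= ?mulr1 ?mulr0 ?addr0 //=.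
by rewrite addrC subrK.
Qed.

Lemma DBD (R : comNzRingType) L (B : 'M[R]_L) l :
  delta_mx l l *m B *m delta_mx l l = B l l *: delta_mx l l.
Proof.
apply/matrixP => i j.
rewrite -mulmxA -[delta_mx l l *m _]mul1mx mulmxA mul_delta_entry.
rewrite -[B *m delta_mx l l]mulmx1 mul_delta_entry !mxE.
rewrite [l == j]eq_sym; case: (i == l); case: (j == l); rewrite /= ?mul1r ?mul0r ?mulr0 ?mulr1 //.
Qed.

Lemma entry_subZ (R : comNzRingType) m n (A Y : 'M[R]_(m, n)) c i j :
  (A - c *: Y) i j = A i j - c * Y i j.
Proof. by rewrite !mxE. Qed.

Lemma lambda_formula (R : realType) L (g : 'cV[R]_L) (Om : 'M[R]_L) l t :
  Om^T = Om -> Om \in unitmx ->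
  let B := invmx Om in let s := t - Om l l in
  let v := B *m g in let a := B l l in let vl := v l 0 in
  let q := (g^T *m B *m g) 0 0 in
  1 + s * a != 0 -> q + s * (a * q - vl ^+ 2) != 0 ->
  lambda_diag g Om l t = g l 0 * vl / (q + s * (a * q - vl ^+ 2)).
Proof.
move=> sym unit B s v a vl q h1 h2.
pose D : 'M[R]_L := delta_mx l l.
set c := s / (1 + s * a).
set N := B - c *: (B *m D *m B).
have hN : (Om + s *: D) *m N = 1%:M.
  rewrite /N mulmxDl !mulmxBr -!scalemxAr !scalemxAl !mulmxA.
  have OB : Om *m B = 1%:M by rewrite /B mulmxV.
  rewrite -!scalemxAl OB !mul1mx DBD -/a -!scalemxAl !scalerA.
  have cE : c * (s * a) = s - c.
    rewrite /c; field; done.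
  rewrite -/D -(mulrA c) cE -scalerBl opprB addrCA subrr addr0 subrK //.
have [uM _] := mulmx1_unit hN.
have inv : invmx (Om + s *: D) = N by rewrite -[N](mulKmx uM) hN mulmx1.
have symB : B^T = B by rewrite /B trmx_inv sym.
rewrite /lambda_diag diag_repl -/s -/D /lambda_EGMM inv.
set n1 := (N *m g) l 0.
have e1 : n1 = vl - c * (a * vl).
  rewrite /n1 /N mulmxBl -scalemxAl -(mulmxA (B *m D) B g) -/v /D.
  by rewrite entry_subZ mul_delta_entry.
have gB : g^T *m B = v^T by rewrite /v trmx_mul symB.
set n2 := (g^T *m N *m g) 0 0.
have e2 : n2 = q - c * (vl * vl).
  rewrite /n2 /N mulmxBr mulmxBl -scalemxAr -scalemxAl.
  have -> : g^T *m (B *m D *m B) *m g = g^T *m B *m D *m (B *m g) by rewrite !mulmxA.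
  rewrite /D.
  by rewrite entry_subZ -/q mul_delta_entry gB -/v mxE.
rewrite e1 e2.
have e3 : q - c * (vl * vl) = (q + s * (a * q - vl ^+ 2)) / (1 + s * a).
  rewrite /c; field; done.
rewrite e3.
rewrite /c; field.
by rewrite h1 h2.
Qed.

Theorem proposition18 (R : realType) (L : nat) (gamma : 'cV[R]_L)
    (Om : 'M[R]_L) :
  (2 <= L)%N ->
  sym_posdef Om ->
  (forall k : 'I_L, 0 < lambda_EGMM gamma Om k) ->
  forall l : 'I_L,
    derivable (lambda_diag gamma Om l) (Om l l) 1 /\
    derive1 (lambda_diag gamma Om l) (Om l l) < 0.
Proof.
move=> L2 spd hlam l.
have u := @pd_unit R L Om spd.
have pdB := @pd_inv R L Om spd.
have [sym pd] := spd.
have [k kl] : exists k : 'I_L, k != l.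
  case: (eqVneq (val l) 0%N) => h.
  - have k1 : (1 < L)%N by [].
    exists (Ordinal k1); apply/eqP => /(congr1 val) /=; rewrite h.  done.
  - have k0 : (0 < L)%N by apply: leq_trans L2.
    exists (Ordinal k0); apply/eqP => /(congr1 val) /= h0.
    by move: h; rewrite /= -h0.
move: (hlam k) (hlam l); rewrite /lambda_EGMM => lamk laml.
set B := invmx Om in lamk laml *.
have symB : B^T = B by rewrite /B trmx_inv sym.
set v := B *m gamma in lamk laml *.
set vl := v l 0 in laml *.
set q := (gamma^T *m B *m gamma) 0 0 in lamk laml *.
set a := B l l.
set x0 := Om l l.
set E := a * q - vl ^+ 2.
set K := gamma l 0 * vl.
have gk : gamma k 0 != 0 by apply: contraTneq lamk => ->; rewrite !mul0r ltxx.
have vl0 : vl != 0 by apply: contraTneq laml => ->; rewrite mulr0 mul0r ltxx.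
have g0 : gamma != 0 by apply: contraNneq gk => ->; rewrite mxE.
have qpos : 0 < q := pdB _ g0.
set w := q *: delta_mx l 0 - vl *: gamma.
have w0 : w != 0.
  apply/eqP => h; have := congr1 (fun M : 'M[R]_(L,1) => M k 0) h; rewrite !mxE (negbTE kl) /= mulr0 sub0r.
  by move/eqP; rewrite oppr_eq0 mulf_eq0 (negbTE vl0) (negbTE gk).
have Epos : 0 < E.
  have := pdB _ w0; rewrite (@cs_quad R L B gamma l symB) -/v -/vl -/q -/a -/E.
  by rewrite pmulr_rgt0.
have c1 : ((1 + (t - x0) * a) @[t --> x0] --> 1 + (x0 - x0) * a)%classic.
  apply: cvgD; first exact: cvg_cst.
  apply: cvgMr_tmp; apply: cvgB; [exact: cvg_id | exact: cvg_cst].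
have c2 : ((q + (t - x0) * E) @[t --> x0] --> q + (x0 - x0) * E)%classic.
  apply: cvgD; first exact: cvg_cst.
  apply: cvgMr_tmp; apply: cvgB; [exact: cvg_id | exact: cvg_cst].
have hq0 : q + (x0 - x0) * E != 0 by rewrite subrr mul0r addr0 lt0r_neq0.
have h10 : 1 + (x0 - x0) * a != 0 by rewrite subrr mul0r addr0 oner_neq0.
have n1 := cvgr_neq0 _ c1 h10.
have n2 := cvgr_neq0 _ c2 hq0.
have heq : \forall t \near x0,
    (K \*: (fun t => (q + (t - x0) * E)^-1)) t = lambda_diag gamma Om l t.
  near=> t.
  have h1 : 1 + (t - x0) * a != 0 by near: t; exact: n1.
  have h2 : q + (t - x0) * E != 0 by near: t; exact: n2.
  rewrite (@lambda_formula R L gamma Om l t sym u h1 h2).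
  done.
have dd : is_derive x0 1 (fun t => q + (t - x0) * E) E.
  apply: (is_derive_eq (is_deriveD (is_derive_cst q x0 1)
     (is_deriveM (is_deriveB (is_derive_id x0 1) (is_derive_cst x0 x0 1))
        (is_derive_cst E x0 1)))).
  rewrite scaler0 !add0r subr0; exact: mulr1.
have di := @is_deriveV R (fun t => q + (t - x0) * E) x0 E 1 hq0 dd.
have dK := is_deriveZ K di.
have dL := near_eq_is_derive heq dK.
case: dL => d1 d2; split => //.
rewrite derive1E d2 subrr mul0r addr0.
change (K * (- q ^- 2 * E) < 0).
have -> : K * (- q ^- 2 * E) = - ((K / q) * (E / q)).
  by field; rewrite lt0r_neq0.
by rewrite oppr_lt0 mulr_gt0 // divr_gt0.
Unshelve. all: by end_near.
Qed.
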